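(* Let $S$ be a closed, densely defined symmetric operator in a Hilbert space $\mathfrak{H}$ with equal deficiency indices, and let $J$ be a fundamental symmetry in $\mathfrak{H}$ commuting with $S$. Then there exists a unitary mapping $Q:\mathfrak{N}_{i}\to\mathfrak{N}_{-i}$ for which the boundary operators $\Gamma_0,\Gamma_1$ defined below satisfy $\Gamma_0 J=J\Gamma_0$ and $\Gamma_1 J=J\Gamma_1$ on $\mathcal{D}(S^* )$ if and only if there exists at least one self-adjoint extension of $S$ commuting with $J$.
   Context: A fundamental symmetry is a bounded operator $J$ with $J=J^*$, $J^2=I$. ''$J$ commutes with an operator $T$'' means $J\mathcal{D}(T)\subset\mathcal{D}(T)$ and $JTu=TJu$ for $u\in\mathcal{D}(T)$. Defect subspaces: $\mathfrak{N}_i=\mathfrak{H}\ominus\mathcal{R}(S-iI)$, $\mathfrak{N}_{-i}=\mathfrak{H}\ominus\mathcal{R}(S+iI)$; since $SJ=JS$, these subspaces are invariant under $J$. By von Neumann's formula every $\psi\in\mathcal{D}(S^* )$ decomposes uniquely as $\psi=u+f_{-i}+f_i$ with $u\in\mathcal{D}(S)$, $f_{\pm i}\in\mathfrak{N}_{\pm i}$. For a unitary $Q:\mathfrak{N}_i\to\mathfrak{N}_{-i}$ define $\Gamma_0,\Gamma_1:\mathcal{D}(S^* )\to\mathfrak{N}_{-i}$ by $\Gamma_0\psi=f_{-i}+Qf_i$, $\Gamma_1\psi=if_{-i}-iQf_i$ (the triplet $(\mathfrak{N}_{-i},\Gamma_0,\Gamma_1)$ is then a boundary triplet of $S^*$).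 *)

(* Defs.v *)
From HB Require Import structures.
From mathcomp Require Import all_boot all_order all_algebra.
From mathcomp Require Import complex.
From mathcomp Require Import reals.
From Stdlib Require Import ClassicalEpsilon.
Set Implicit Arguments. Unset Strict Implicit. Unset Printing Implicit Defensive.
Import Order.TTheory GRing.Theory Num.Theory.
Local Open Scope ring_scope.

Section Hilbert.
Variables (R : realType) (V : lmodType R[i]) (ip : V -> V -> R[i]).

Definition is_inner_product : Prop :=
  [/\ (forall (a : R[i]) (x y z : V), ip (a *: x + y) z = a * ip x z + ip y z),
      (forall x y : V, ip y x = conjc (ip x y)),
      (forall x : V, 0 <= ip x x) &
      (forall x : V, ip x x = 0 -> x = 0)].

Definition sqnorm (x : V) : R := complex.Re (ip x x).

Definition converges_to (u : nat -> V) (l : V) : Prop :=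
  forall e : R, 0 < e -> exists N : nat, forall n, (N <= n)%N -> sqnorm (u n - l) < e.

Definition cauchy_seq (u : nat -> V) : Prop :=
  forall e : R, 0 < e -> exists N : nat,
    forall m n, (N <= m)%N -> (N <= n)%N -> sqnorm (u m - u n) < e.

Definition hilbert_complete : Prop :=
  forall u : nat -> V, cauchy_seq u -> exists l, converges_to u l.

(* A (possibly unbounded) linear operator: a domain together with a map;
   values outside the domain are irrelevant. *)
Record operator := Operator { dom : V -> Prop; app : V -> V }.

Definition is_linear_operator (T : operator) : Prop :=
  dom T 0 /\
  forall (a : R[i]) (x y : V), dom T x -> dom T y ->
    dom T (a *: x + y) /\ app T (a *: x + y) = a *: app T x + app T y.

Definition densely_defined (T : operator) : Prop :=
  forall (v : V) (e : R), 0 < e -> exists x, dom T x /\ sqnorm (v - x) < e.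

Definition closed_operator (T : operator) : Prop :=
  forall (u : nat -> V) (x y : V), (forall n, dom T (u n)) ->
    converges_to u x -> converges_to (fun n => app T (u n)) y ->
    dom T x /\ app T x = y.

Definition symmetric_operator (T : operator) : Prop :=
  forall x y, dom T x -> dom T y -> ip (app T x) y = ip x (app T y).

Definition adjoint_graph (T : operator) (y z : V) : Prop :=
  forall x, dom T x -> ip (app T x) y = ip x z.

Definition adjoint_dom (T : operator) (y : V) : Prop :=
  exists z, adjoint_graph T y z.

Definition self_adjoint (A : operator) : Prop :=
  forall y z, adjoint_graph A y z <-> (dom A y /\ z = app A y).

Definition extends (A T : operator) : Prop :=
  forall x, dom T x -> dom A x /\ app A x = app T x.

(* Defect subspaces N_i = H (-) R(S - iI), N_{-i} = H (-) R(S + iI) *)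
Definition defect_i (S : operator) (f : V) : Prop :=
  forall x, dom S x -> ip (app S x - 'i%C *: x) f = 0.
Definition defect_mi (S : operator) (f : V) : Prop :=
  forall x, dom S x -> ip (app S x + 'i%C *: x) f = 0.

Definition orthonormal_basis (N : V -> Prop) (B : V -> Prop) : Prop :=
  [/\ (forall b, B b -> N b),
      (forall b, B b -> ip b b = 1),
      (forall b c, B b -> B c -> b <> c -> ip b c = 0) &
      (forall v, N v -> (forall b, B b -> ip v b = 0) -> v = 0)].

Definition same_hilbert_dim (N M : V -> Prop) : Prop :=
  exists (B C : V -> Prop) (g : V -> V),
    [/\ orthonormal_basis N B, orthonormal_basis M C,
        (forall b, B b -> C (g b)),
        (forall b b', B b -> B b' -> g b = g b' -> b = b') &
        (forall c, C c -> exists2 b, B b & g b = c)].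

Definition equal_deficiency_indices (S : operator) : Prop :=
  same_hilbert_dim (defect_i S) (defect_mi S).

Definition fundamental_symmetry (J : V -> V) : Prop :=
  [/\ (forall (a : R[i]) x y, J (a *: x + y) = a *: J x + J y),
      (exists M : R, forall x, sqnorm (J x) <= M * sqnorm x),
      (forall x y, ip (J x) y = ip x (J y)) &
      (forall x, J (J x) = x)].

Definition commutes_with (J : V -> V) (T : operator) : Prop :=
  forall u, dom T u -> dom T (J u) /\ app T (J u) = J (app T u).

Definition unitary_defect (S : operator) (Q : V -> V) : Prop :=
  [/\ (forall (a : R[i]) f g, defect_i S f -> defect_i S g ->
          Q (a *: f + g) = a *: Q f + Q g),
      (forall f, defect_i S f -> defect_mi S (Q f)),
      (forall f g, defect_i S f -> defect_i S g -> ip (Q f) (Q g) = ip f g) &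
      (forall h, defect_mi S h -> exists2 f, defect_i S f & Q f = h)].

(* von Neumann decomposition psi = u + f_{-i} + f_i *)
Definition vN_decomp (S : operator) (psi : V) (t : V * V * V) : Prop :=
  [/\ dom S t.1.1, defect_mi S t.1.2, defect_i S t.2 &
      psi = t.1.1 + t.1.2 + t.2].

(* the (unique, for psi in D(S^* )) decomposition, chosen by epsilon *)
Definition vN_choose (S : operator) (psi : V) : V * V * V :=
  epsilon (inhabits (0, 0, 0)) (vN_decomp S psi).

Definition Gamma0 (S : operator) (Q : V -> V) (psi : V) : V :=
  let t := vN_choose S psi in t.1.2 + Q t.2.

Definition Gamma1 (S : operator) (Q : V -> V) (psi : V) : V :=
  let t := vN_choose S psi in 'i%C *: t.1.2 - 'i%C *: Q t.2.

End Hilbert.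

(* Main.v *)
Require Import Defs.
From HB Require Import structures.
From mathcomp Require Import all_boot all_order all_algebra.
From mathcomp Require Import complex.
From mathcomp Require Import classical_sets reals ring lra.
From Stdlib Require Import ClassicalEpsilon.
Import Order.TTheory GRing.Theory Num.Theory.
Set Implicit Arguments. Unset Strict Implicit.
Local Open Scope ring_scope.

Section Cplx.
Variable R : realType.
Implicit Types a b : R[i].
Lemma conj_i : conjc ('i%C : R[i]) = - 'i%C.
Proof. by apply/eqP; rewrite eq_complex /= oppr0 !eqxx. Qed.
Lemma conjD a b : conjc (a + b) = conjc a + conjc b. Proof. exact: (rmorphD conjc). Qed.
Lemma conjM a b : conjc (a * b) = conjc a * conjc b. Proof. exact: (rmorphM conjc). Qed.
Lemma conjN a : conjc (- a) = - conjc a. Proof. exact: (rmorphN conjc). Qed.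
Lemma conjB a b : conjc (a - b) = conjc a - conjc b. Proof. exact: (rmorphB conjc). Qed.
Lemma conjK a : conjc (conjc a) = a. Proof. exact: conjcK. Qed.
Lemma conj0 : conjc (0 : R[i]) = 0. Proof. exact: conjc0. Qed.
Lemma conj1 : conjc (1 : R[i]) = 1. Proof. exact: conjc1. Qed.
Lemma conjR (r : R) : conjc (r%:C)%C = (r%:C)%C. Proof. exact: conjc_real. Qed.
Lemma ii : ('i%C : R[i]) * 'i%C = -1. Proof. by rewrite -expr2 sqr_i. Qed.
Lemma ReD a b : complex.Re (a + b) = complex.Re a + complex.Re b. Proof. by rewrite raddfD. Qed.
Lemma ReN a : complex.Re (- a) = - complex.Re a. Proof. by rewrite raddfN. Qed.
Lemma ReB a b : complex.Re (a - b) = complex.Re a - complex.Re b. Proof. by rewrite raddfB. Qed.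
Lemma ReR (r : R) : complex.Re (r%:C)%C = r. Proof. by []. Qed.
Lemma ReMR a (r : R) : complex.Re (a * (r%:C)%C) = complex.Re a * r.
Proof. by case: a => x y /=; rewrite mulr0 subr0. Qed.
Lemma ReRM a (r : R) : complex.Re ((r%:C)%C * a) = r * complex.Re a.
Proof. by case: a => x y /=; rewrite mul0r subr0. Qed.
Lemma ReJ a : complex.Re (conjc a) = complex.Re a. Proof. by case: a. Qed.

Lemma RCM (x y : R) : ((x * y)%:C)%C = (x%:C)%C * (y%:C)%C :> R[i].
Proof. by apply/eqP; rewrite eq_complex /= !mulr0 subr0 mul0r addr0 !eqxx. Qed.
Lemma RCD (x y : R) : ((x + y)%:C)%C = (x%:C)%C + (y%:C)%C :> R[i].
Proof. by apply/eqP; rewrite eq_complex /= addr0 !eqxx. Qed.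
Lemma RCN (x : R) : ((- x)%:C)%C = - (x%:C)%C :> R[i].
Proof. by apply/eqP; rewrite eq_complex /= oppr0 !eqxx. Qed.
Lemma RCB (x y : R) : ((x - y)%:C)%C = (x%:C)%C - (y%:C)%C :> R[i].
Proof. by rewrite RCD RCN. Qed.

Definition nc a : R := complex.Re (a * conjc a).
Lemma ncE a : nc a = complex.Re a ^+ 2 + complex.Im a ^+ 2.
Proof. case: a => x y; rewrite /nc /=. rewrite !expr2. lra. Qed.
Lemma nc_ge0 a : 0 <= nc a.
Proof. rewrite ncE; apply: addr_ge0; exact: sqr_ge0. Qed.
Lemma nc_eq0 a : nc a = 0 -> a = 0.
Proof.
rewrite ncE => H.
have h1 : complex.Re a ^+ 2 = 0.
  apply/eqP; rewrite eq_le sqr_ge0 andbT -H lerDl; exact: sqr_ge0.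
have h2 : complex.Im a ^+ 2 = 0 by rewrite h1 add0r in H.
move: h1 h2 {H}; case: a => x y /= /eqP; rewrite sqrf_eq0 => /eqP -> /eqP; rewrite sqrf_eq0 => /eqP ->.
by [].
Qed.
Lemma mul_conj a : a * conjc a = ((nc a)%:C)%C.
Proof. case: a => x y; rewrite /nc /=; apply/eqP; rewrite eq_complex /=; apply/andP; split; apply/eqP; lra. Qed.
Lemma ncRM (t : R) a : nc ((t%:C)%C * a) = t ^+ 2 * nc a.
Proof. rewrite !ncE; case: a => x y /=; rewrite !mul0r !subr0 !addr0; ring. Qed.
Lemma RC1 : ((1%:C)%C : R[i]) = 1. Proof. by []. Qed.
Lemma RC0 : ((0%:C)%C : R[i]) = 0. Proof. by []. Qed.
End Cplx.
Arguments RC1 {R}.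
Arguments RC0 {R}.
Arguments nc {R}.
Arguments conj_i {R}.
Arguments ii {R}.
Arguments conj0 {R}.
Arguments conj1 {R}.

Section IP.
Variables (R : realType) (V : lmodType R[i]) (ip : V -> V -> R[i]).
Hypothesis Hip : is_inner_product ip.
Local Notation sq := (sqnorm ip).
Local Notation Re := (@complex.Re R).

Lemma ipC x y : ip y x = conjc (ip x y).
Proof. by case: Hip => _ h _ _; apply: h. Qed.
Lemma ipDl x y z : ip (x + y) z = ip x z + ip y z.
Proof. by case: Hip => h _ _ _; rewrite -{1}(scale1r x) h mul1r. Qed.
Lemma ip0l z : ip 0 z = 0.
Proof.
have := ipDl 0 0 z; rewrite addr0 => /eqP; rewrite -subr_eq0 opprD addrA subrr sub0r oppr_eq0.
by move/eqP.
Qed.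
Lemma ipZl a x z : ip (a *: x) z = a * ip x z.
Proof. by case: Hip => h _ _ _; rewrite -(addr0 (a *: x)) h ip0l addr0. Qed.
Lemma ipNl x z : ip (- x) z = - ip x z.
Proof. by rewrite -scaleN1r ipZl mulN1r. Qed.
Lemma ipBl x y z : ip (x - y) z = ip x z - ip y z.
Proof. by rewrite ipDl ipNl. Qed.
Lemma ipDr z x y : ip z (x + y) = ip z x + ip z y.
Proof. by rewrite ipC ipDl conjD -!ipC. Qed.
Lemma ip0r z : ip z 0 = 0.
Proof. by rewrite ipC ip0l conj0. Qed.
Lemma ipZr z a x : ip z (a *: x) = conjc a * ip z x.
Proof. by rewrite ipC ipZl conjM -ipC. Qed.
Lemma ipNr z x : ip z (- x) = - ip z x.
Proof. by rewrite ipC ipNl conjN -ipC. Qed.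
Lemma ipBr z x y : ip z (x - y) = ip z x - ip z y.
Proof. by rewrite ipDr ipNr. Qed.

Lemma ip_sq x : ip x x = ((sq x)%:C)%C.
Proof.
case: Hip => _ _ h _; move: (h x); rewrite /sqnorm lecE.
case: (ip x x) => a b /= /andP [/eqP hb _]; by rewrite hb.
Qed.
Lemma sq_ge0 x : 0 <= sq x.
Proof. case: Hip => _ _ h _; move: (h x); rewrite ip_sq lecR //. Qed.
Lemma sq_eq0 x : sq x = 0 -> x = 0.
Proof. move=> h; case: Hip => _ _ _; apply; by rewrite ip_sq h. Qed.
Lemma sq0 : sq 0 = 0.
Proof. by rewrite /sqnorm ip0l. Qed.

Lemma sqD x y : sq (x + y) = sq x + sq y + 2 * Re (ip x y).
Proof.
have := ip_sq (x + y); rewrite ipDl !ipDr !ip_sq (ipC x y) => /(congr1 Re).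
rewrite /= !ReD ReJ => <-. rewrite mulr2n mulrDl mul1r. lra.
Qed.
Lemma sqN x : sq (- x) = sq x.
Proof. by rewrite /sqnorm ipNl ipNr opprK. Qed.
Lemma sqB x y : sq (x - y) = sq x + sq y - 2 * Re (ip x y).
Proof. rewrite sqD sqN ipNr ReN; lra. Qed.
Lemma sqZ a x : sq (a *: x) = nc a * sq x.
Proof. by rewrite /sqnorm ipZl ipZr mulrA mul_conj ip_sq -rmorphM. Qed.
Lemma sqZR (t : R) x : sq ((t%:C)%C *: x) = t ^+ 2 * sq x.
Proof. rewrite sqZ ncE /= expr0n /= addr0 //. Qed.

Lemma young (t : R) x y : 2 * t * Re (ip x y) <= t ^+ 2 * sq x + sq y.
Proof.
have := sq_ge0 ((t%:C)%C *: x - y); rewrite sqB sqZR ipZl ReRM. lra.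
Qed.

Lemma cauchy_schwarz x y : nc (ip x y) <= sq x * sq y.
Proof.
have [hy|hy] := eqVneq (sq y) 0.
  rewrite (sq_eq0 hy) ip0r sq0 mulr0 /nc mul0r //.
have hpos : 0 < sq y by rewrite lt_neqAle eq_sym hy sq_ge0.
set p := ip x y.
have h := sq_ge0 (((sq y)%:C)%C *: x - p *: y).
have e : ip (((sq y)%:C)%C *: x - p *: y) (((sq y)%:C)%C *: x - p *: y)
   = (((sq y * (sq y * sq x - nc p)))%:C)%C.
  rewrite !ipBl !ipBr !ipZl !ipZr !ip_sq (ipC x y) -/p conjR.
  rewrite RCM RCB RCM -!mul_conj ?conjK. ring.
move: h; rewrite /sqnorm e /= => h.
have : 0 <= sq y * sq x - nc p by rewrite -(pmulr_rge0 _ hpos).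
lra.
Qed.
End IP.

Section Ops.
Variables (R : realType) (V : lmodType R[i]) (ip : V -> V -> R[i]).
Hypothesis Hip : is_inner_product ip.
Local Notation sq := (sqnorm ip).
Local Notation Re := (@complex.Re R).
Local Notation I := ('i%C : R[i]).

Lemma vec_eq v1 v2 : (forall t, ip t v1 = ip t v2) -> v1 = v2.
Proof.
move=> h; apply/eqP; rewrite -subr_eq0; apply/eqP; apply: (sq_eq0 Hip).
by rewrite /sqnorm (ipBr Hip) h subrr.
Qed.

Lemma real_of_conj (z : R[i]) : conjc z = z -> z = ((Re z)%:C)%C.
Proof.
case: z => a b /= /eqP; rewrite eq_complex /= eqxx /= => /eqP h.
have -> : b = 0 by lra.
by [].
Qed.

Lemma Re_c0 (c : R[i]) : conjc c = - c -> Re c = 0.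
Proof. case: c => a b /= /eqP; rewrite eq_complex /= => /andP [/eqP h _]; lra. Qed.

Lemma I_neq0 : I != 0.
Proof. by rewrite eq_complex /= oner_eq0 andbF. Qed.

Lemma small_inv (e : R) : 0 < e -> exists N : nat, forall n, (N <= n)%N -> (n.+1%:R)^-1 < e.
Proof.
move=> he; exists (Num.bound (e^-1)) => n hn.
have he' : 0 < e^-1 by rewrite invr_gt0.
have h1 := archi_boundP (ltW he').
have h2 : (Num.bound e^-1)%:R <= n%:R :> R by rewrite ler_nat.
have h3 : n%:R < n.+1%:R :> R by rewrite ltr_nat.
have h4 : e^-1 < n.+1%:R by apply: (lt_le_trans h1); apply: le_trans h2 (ltW h3).
rewrite invf_plt ?posrE // ltr0n //.
Qed.

Section Op.
Variable T : operator V.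
Hypothesis HTlin : is_linear_operator T.

Lemma dom0 : dom T 0. Proof. by case: HTlin. Qed.
Lemma domL a x y : dom T x -> dom T y -> dom T (a *: x + y).
Proof. by case: HTlin => _ h hx hy; case: (h a x y hx hy). Qed.
Lemma appL a x y : dom T x -> dom T y -> app T (a *: x + y) = a *: app T x + app T y.
Proof. by case: HTlin => _ h hx hy; case: (h a x y hx hy). Qed.
Lemma app0 : app T 0 = 0.
Proof.
have := appL 1 dom0 dom0; rewrite !scale1r addr0 => /eqP.
by rewrite -subr_eq0 opprD addrA subrr sub0r oppr_eq0 => /eqP.
Qed.
Lemma domD x y : dom T x -> dom T y -> dom T (x + y).
Proof. by move=> hx hy; have := domL 1 hx hy; rewrite !scale1r. Qed.
Lemma appD x y : dom T x -> dom T y -> app T (x + y) = app T x + app T y.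
Proof. by move=> hx hy; have := appL 1 hx hy; rewrite !scale1r. Qed.
Lemma domZ a x : dom T x -> dom T (a *: x).
Proof. by move=> hx; rewrite -(addr0 (a *: x)); apply: domL hx dom0. Qed.
Lemma appZ a x : dom T x -> app T (a *: x) = a *: app T x.
Proof. by move=> hx; rewrite -(addr0 (a *: x)) (appL _ hx dom0) app0 addr0. Qed.
Lemma domN x : dom T x -> dom T (- x).
Proof. by move=> hx; rewrite -scaleN1r; apply: domZ. Qed.
Lemma appN x : dom T x -> app T (- x) = - app T x.
Proof. by move=> hx; rewrite -scaleN1r appZ // scaleN1r. Qed.
Lemma domB x y : dom T x -> dom T y -> dom T (x - y).
Proof. by move=> hx hy; apply: domD => //; apply: domN. Qed.
Lemma appB x y : dom T x -> dom T y -> app T (x - y) = app T x - app T y.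
Proof. by move=> hx hy; rewrite appD ?appN //; apply: domN. Qed.

Lemma adjL a y z y' z' : adjoint_graph ip T y z -> adjoint_graph ip T y' z' ->
  adjoint_graph ip T (a *: y + y') (a *: z + z').
Proof. move=> h h' x hx; by rewrite !(ipDr Hip) !(ipZr Hip) h // h'. Qed.
Lemma adj0 : adjoint_graph ip T 0 0.
Proof. by move=> x _; rewrite !(ip0r Hip). Qed.
Lemma adjD y z y' z' : adjoint_graph ip T y z -> adjoint_graph ip T y' z' ->
  adjoint_graph ip T (y + y') (z + z').
Proof. by move=> h h'; have := adjL 1 h h'; rewrite !scale1r. Qed.
Lemma adjZ a y z : adjoint_graph ip T y z -> adjoint_graph ip T (a *: y) (a *: z).
Proof. by move=> h; have := adjL a h adj0; rewrite !addr0. Qed.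
Lemma adjN y z : adjoint_graph ip T y z -> adjoint_graph ip T (- y) (- z).
Proof. by move=> h; have := adjZ (-1) h; rewrite !scaleN1r. Qed.
Lemma adjB y z y' z' : adjoint_graph ip T y z -> adjoint_graph ip T y' z' ->
  adjoint_graph ip T (y - y') (z - z').
Proof. by move=> h h'; apply: adjD => //; apply: adjN. Qed.

Hypothesis HTdense : densely_defined ip T.

Lemma dense_orth w : (forall x, dom T x -> ip x w = 0) -> w = 0.
Proof.
move=> h; apply: (sq_eq0 Hip).
apply/eqP; rewrite eq_le sq_ge0 // andbT; apply/negP => /negP; rewrite -ltNge => hpos.
have [x [hx hlt]] := HTdense w hpos.
move: hlt; rewrite (sqB Hip) (ipC Hip) h // conj0 /=.
have := sq_ge0 Hip x; lra.
Qed.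

Lemma adj_unique y z1 z2 : adjoint_graph ip T y z1 -> adjoint_graph ip T y z2 -> z1 = z2.
Proof.
move=> h1 h2; apply/eqP; rewrite -subr_eq0; apply/eqP; apply: dense_orth => x hx.
by rewrite (ipBr Hip) -h1 // -h2 // subrr.
Qed.
End Op.
End Ops.

Ltac ipsimp H := repeat progress rewrite ?(ipDr H) ?(ipBr H) ?(ipNr H) ?(ipZr H) ?(ipDl H) ?(ipBl H) ?(ipNl H) ?(ipZl H)
  ?(ip0l H) ?(ip0r H) ?conjD ?conjM ?conjN ?conjB ?conjK ?conj_i ?conjR ?RC1 ?RC0.

Section Proj.
Variables (R : realType) (V : lmodType R[i]) (ip : V -> V -> R[i]).
Hypothesis Hip : is_inner_product ip.
Hypothesis Hcompl : hilbert_complete ip.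
Local Notation sq := (sqnorm ip).
Local Notation Re := (@complex.Re R).
Variable T : operator V.
Hypotheses (HTlin : is_linear_operator T) (HTsym : symmetric_operator ip T)
  (HTclosed : closed_operator ip T).
Variable c : R[i].
Hypotheses (hc : conjc c = - c) (hc2 : c * c = -1).

Let Tc x := app T x + c *: x.

Lemma TcL a x y : dom T x -> dom T y -> Tc (a *: x + y) = a *: Tc x + Tc y.
Proof.
move=> hx hy; rewrite /Tc appL //; apply: (vec_eq Hip) => t; ipsimp Hip; ring.
Qed.
Lemma TcB x y : dom T x -> dom T y -> Tc (x - y) = Tc x - Tc y.
Proof.
move=> hx hy; rewrite /Tc appB //; apply: (vec_eq Hip) => t; ipsimp Hip; ring.
Qed.

Lemma Tc0 : Tc 0 = 0.
Proof. by rewrite /Tc app0 // scaler0 addr0. Qed.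
Lemma TcZ a x : dom T x -> Tc (a *: x) = a *: Tc x.
Proof. by move=> hx; rewrite -(addr0 (a *: x)) TcL ?Tc0 ?addr0 //; apply: dom0. Qed.
Lemma TcD x y : dom T x -> dom T y -> Tc (x + y) = Tc x + Tc y.
Proof. by move=> hx hy; have := TcL 1 hx hy; rewrite !scale1r. Qed.

Lemma normid x : dom T x -> sq (Tc x) = sq (app T x) + sq x.
Proof.
move=> hx; rewrite /Tc (sqD Hip) (sqZ Hip) (ipZr Hip) hc.
have -> : nc c = 1 by rewrite /nc hc mulrN hc2 opprK.
have hr : conjc (ip (app T x) x) = ip (app T x) x by rewrite -(ipC Hip) HTsym.
rewrite (real_of_conj hr) mulNr ReN ReMR (Re_c0 hc) mul0r oppr0 mulr0 addr0 mul1r //.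
Qed.

Lemma proj w : exists x r, [/\ dom T x, (forall x', dom T x' -> ip (Tc x') r = 0) &
   w = Tc x + r].
Proof.
pose E := (fun d : R => exists x, dom T x /\ d = sq (w - Tc x)).
have hE : has_inf E.
  split; first by exists (sq (w - Tc 0)); exists 0; split => //; exact: dom0.
  by exists 0 => d [x [_ ->]]; apply: sq_ge0.
pose del := inf E.
have hlb : forall x, dom T x -> del <= sq (w - Tc x).
  move=> x hx; apply: (ge_inf hE.2); by exists x.
have hex : forall n : nat, exists x, dom T x /\ sq (w - Tc x) < del + (n.+1%:R)^-1.
  move=> n; have hp : 0 < (n.+1%:R : R)^-1 by rewrite invr_gt0 ltr0n.
  have [d [x [hx ->]] hd] := inf_adherent hp hE; by exists x.
pose xs n := epsilon (inhabits 0) (fun x => dom T x /\ sq (w - Tc x) < del + (n.+1%:R)^-1).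
have hxs : forall n, dom T (xs n) /\ sq (w - Tc (xs n)) < del + (n.+1%:R)^-1.
  move=> n; exact: (epsilon_spec (inhabits 0) _ (hex n)).
have hdel0 : 0 <= del.
  by apply: lb_le_inf hE.1 _ => d [x [_ ->]]; apply: sq_ge0.
(* parallelogram bound *)
have hpar : forall p q, sq (Tc (xs p) - Tc (xs q)) <=
     2 * (p.+1%:R)^-1 + 2 * (q.+1%:R)^-1.
  move=> p q; have [hp1 hp2] := hxs p; have [hq1 hq2] := hxs q.
  pose h := (((2 : R)^-1)%:C)%C.
  have hm : dom T (h *: (xs p + xs q)) by apply: domZ => //; apply: domD.
  have h4 := hlb _ hm.
  have e1 : ((2%:C)%C : R[i]) *: (w - Tc (h *: (xs p + xs q))) =
     (w - Tc (xs p)) + (w - Tc (xs q)).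
    rewrite TcZ ?TcD //; last by apply: domD.
    apply: (vec_eq Hip) => t; ipsimp Hip.
    have e : ((2%:C)%C : R[i]) * h = 1.
      by rewrite /h -RCM mulfV // pnatr_eq0.
    rewrite mulrBr mulrA e mul1r; ring.
  have e2 : sq ((w - Tc (xs p)) + (w - Tc (xs q))) = 4 * sq (w - Tc (h *: (xs p + xs q))).
    by rewrite -e1 (sqZR Hip) expr2 -natrM.
  have e3 : Tc (xs p) - Tc (xs q) = (w - Tc (xs q)) - (w - Tc (xs p)).
    by apply: (vec_eq Hip) => t; ipsimp Hip; ring.
  have e4 := sqD Hip (w - Tc (xs q)) (w - Tc (xs p)).
  have e5 := sqB Hip (w - Tc (xs q)) (w - Tc (xs p)).
  rewrite addrC in e4; rewrite e3.
  move: (p.+1%:R^-1 : R) (q.+1%:R^-1 : R) hp2 hq2 => ep eq hp2 hq2.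
  have f1 : 4 * del <= sq (w - Tc (xs p) + (w - Tc (xs q))) by rewrite e2; lra.
  have f2 : sq (w - Tc (xs q) - (w - Tc (xs p))) = 2 * sq (w - Tc (xs q)) + 2 * sq (w - Tc (xs p)) - sq (w - Tc (xs p) + (w - Tc (xs q))).
    rewrite e5 e4. ring.
  rewrite f2. lra.
have hsmall : forall e : R, 0 < e -> exists N : nat, forall p q, (N <= p)%N -> (N <= q)%N ->
    sq (Tc (xs p) - Tc (xs q)) < e.
  move=> e he; have he4 : 0 < e / 4 by rewrite divr_gt0.
  have [N hN] := small_inv he4; exists N => p q hp hq.
  apply: (le_lt_trans (hpar p q)); have := hN _ hp; have := hN _ hq.
  move: (p.+1%:R^-1 : R) (q.+1%:R^-1 : R) => ep eq; lra.
have hdiff : forall p q, sq (xs p - xs q) <= sq (Tc (xs p) - Tc (xs q)) /\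
   sq (app T (xs p) - app T (xs q)) <= sq (Tc (xs p) - Tc (xs q)).
  move=> p q; have [h1 _] := hxs p; have [h2 _] := hxs q.
  have hd : dom T (xs p - xs q) by apply: domB.
  rewrite -TcB // normid // appB //.
  have := sq_ge0 Hip (xs p - xs q); have := sq_ge0 Hip (app T (xs p) - app T (xs q)).
  split; lra.
have [xl hxl] : exists l, converges_to ip xs l.
  apply: Hcompl => e he; have [N hN] := hsmall e he; exists N => p q hp hq.
  apply: le_lt_trans (hN p q hp hq); exact: (hdiff p q).1.
have [yl hyl] : exists l, converges_to ip (fun n => app T (xs n)) l.
  apply: Hcompl => e he; have [N hN] := hsmall e he; exists N => p q hp hq.
  apply: le_lt_trans (hN p q hp hq); exact: (hdiff p q).2.
have [hdl happ] := HTclosed (fun n => (hxs n).1) hxl hyl.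
pose m := Tc xl.
have hconv : forall e : R, 0 < e -> exists N : nat, forall n, (N <= n)%N -> sq (Tc (xs n) - m) < e.
  move=> e he; have he2 : 0 < e / 2 by rewrite divr_gt0.
  have [N1 h1] := hxl _ he2; have [N2 h2] := hyl _ he2.
  exists (maxn N1 N2) => n hn.
  have hn1 : (N1 <= n)%N by apply: leq_trans hn; apply: leq_maxl.
  have hn2 : (N2 <= n)%N by apply: leq_trans hn; apply: leq_maxr.
  have hx1 := (hxs n).1.
  have hd : dom T (xs n - xl) by apply: domB.
  rewrite /m -TcB // normid // appB // happ.
  have := h1 _ hn1; have := h2 _ hn2; lra.
have hle : sq (w - m) <= del.
  rewrite leNgt; apply/negP => hgt.
  set g := sq (w - m) - del.
  have hg : 0 < g by rewrite /g subr_gt0.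
  pose s := g / (4 * (del + 2)).
  have hs : 0 < s by rewrite /s divr_gt0 // mulr_gt0 //; lra.
  have hsdef : s * (4 * (del + 2)) = g.
    rewrite /s mulfVK //; apply/eqP => h0; move: h0 hdel0; lra.
  have hsd : s * (del + 1) <= g / 4.
    have : s * (del + 1) * 4 <= g by rewrite -hsdef; nra.
    move=> h; rewrite ler_pdivlMr //; lra.
  have hg4 : 0 < g / 4 by rewrite divr_gt0.
  have hsg : 0 < s * g / 4 by rewrite !divr_gt0 // mulr_gt0.
  have [N1 hN1] := small_inv hg4.
  have [N2 hN2] := small_inv (ltr01 : (0:R) < 1).
  have [N3 hN3] := hconv _ hg4.
  have [N4 hN4] := hconv _ hsg.
  pose n := maxn (maxn N1 N2) (maxn N3 N4).
  have hn1 : (N1 <= n)%N by rewrite /n !leq_max leqnn.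
  have hn2 : (N2 <= n)%N by rewrite /n !leq_max leqnn orbT.
  have hn3 : (N3 <= n)%N by rewrite /n !leq_max leqnn orbT.
  have hn4 : (N4 <= n)%N by rewrite /n !leq_max leqnn !orbT.
  have k1 := hN1 _ hn1; have k2 := hN2 _ hn2; have k3 := hN3 _ hn3; have k4 := hN4 _ hn4.
  have k5 := (hxs n).2.
  have ew : w - m = (w - Tc (xs n)) + (Tc (xs n) - m) by rewrite addrA subrK.
  have k6 := sqD Hip (w - Tc (xs n)) (Tc (xs n) - m).
  rewrite -ew in k6.
  have k7 := young Hip s (w - Tc (xs n)) (Tc (xs n) - m).
  move: k1 k2 k5 hgt k6 k7 hsd k3 k4.
  rewrite /g; move: (n.+1%:R^-1 : R) => ep.
  move: (sq (w - Tc (xs n))) (sq (Tc (xs n) - m)) (complex.Re (ip (w - Tc (xs n)) (Tc (xs n) - m))) (sq (w - m)) => a b r q.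
  move=> k1 k2 k5 hgt k6 k7 hsd k3 k4.
  have ha : s * a <= s * (del + ep) by rewrite ler_wpM2l //; [lra | lra].
  have ha2 : s ^+ 2 * a <= s ^+ 2 * (del + 1) by rewrite ler_wpM2l ?sqr_ge0 //; lra.
  have hs1 : s * (s * (del + 1)) <= s * ((q - del) / 4) by rewrite ler_wpM2l //; lra.
  nra.
exists xl, (w - m); split => //; last by rewrite /m addrC subrK.
move=> x' hx'; set p := ip (w - m) (Tc x').
rewrite (ipC Hip) -/p.
suff : nc p = 0 by move/nc_eq0 => ->; rewrite conj0.
set K := sq (Tc x').
have hK : 0 <= K by apply: sq_ge0.
set t := (K + 1)^-1.
have ht : t * (K + 1) = 1 by rewrite /t mulVf //; apply/eqP => h0; move: h0 hK; lra.
have ht0 : 0 < t by rewrite /t invr_gt0; lra.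
pose a := (t%:C)%C * p.
have hx'' : dom T (a *: x' + xl) by apply: domL.
have k1 := hlb _ hx''.
rewrite TcL // -/m in k1.
have ew : w - (a *: Tc x' + m) = (w - m) - a *: Tc x' by apply: (vec_eq Hip) => u; ipsimp Hip; ring.
rewrite ew (sqB Hip) (sqZ Hip) (ipZr Hip) -/p -/K /a ncRM conjM conjR -(mulrA (t%:C)%C) (mulrC (conjc p) p) mul_conj ReRM ReR in k1.
have hP := nc_ge0 p.
move: k1 hle hP; move: (nc p) => P k1 hle hP.
have htK : t * K = 1 - t by move: ht; rewrite mulrDr mulr1 => h; lra.
have e : t ^+ 2 * P * K = t * P - t ^+ 2 * P.
  by rewrite expr2 -mulrA (mulrC P) mulrA -(mulrA t t K) htK; ring.
rewrite e in k1.
have h1 : 0 <= t * P by apply: mulr_ge0; lra.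
have h2 : 0 <= t ^+ 2 * P by apply: mulr_ge0 => //; apply: sqr_ge0.
have h3 : t * P = 0 by lra.
move/eqP: h3; rewrite mulf_eq0 => /orP [/eqP h|/eqP //]; lra.
Qed.
End Proj.

Section SLemmas.
Variables (R : realType) (V : lmodType R[i]) (ip : V -> V -> R[i]).
Hypothesis Hip : is_inner_product ip.
Hypothesis Hcompl : hilbert_complete ip.
Local Notation sq := (sqnorm ip).
Local Notation Re := (@complex.Re R).
Local Notation I := ('i%C : R[i]).
Variable S : operator V.
Hypotheses (HSlin : is_linear_operator S) (HSdense : densely_defined ip S)
  (HSclosed : closed_operator ip S) (HSsym : symmetric_operator ip S).

Lemma conjI_neg : conjc I = - I. Proof. exact: conj_i. Qed.
Lemma II : I * I = -1. Proof. exact: ii. Qed.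

Lemma adjS u : dom S u -> adjoint_graph ip S u (app S u).
Proof. by move=> hu x hx; apply: HSsym. Qed.

Lemma adjNi f : defect_i ip S f -> adjoint_graph ip S f (- I *: f).
Proof.
move=> hf x hx; have := hf x hx; rewrite (ipBl Hip) (ipZl Hip) (ipZr Hip) conjN conj_i opprK.
by move/eqP; rewrite subr_eq0 => /eqP.
Qed.
Lemma adjNmi f : defect_mi ip S f -> adjoint_graph ip S f (I *: f).
Proof.
move=> hf x hx; have := hf x hx; rewrite (ipDl Hip) (ipZl Hip) (ipZr Hip) conj_i.
by move/eqP; rewrite addr_eq0 mulNr => /eqP.
Qed.
Lemma defi_of_adj f : adjoint_graph ip S f (- I *: f) -> defect_i ip S f.
Proof.
move=> h x hx; rewrite (ipBl Hip) (ipZl Hip) h // (ipZr Hip) conjN conj_i opprK subrr //.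
Qed.
Lemma defmi_of_adj f : adjoint_graph ip S f (I *: f) -> defect_mi ip S f.
Proof.
move=> h x hx; rewrite (ipDl Hip) (ipZl Hip) h // (ipZr Hip) conj_i mulNr addNr //.
Qed.
Lemma defiL a f g : defect_i ip S f -> defect_i ip S g -> defect_i ip S (a *: f + g).
Proof. by move=> hf hg x hx; rewrite (ipDr Hip) (ipZr Hip) hf // hg // mulr0 addr0. Qed.
Lemma defmiL a f g : defect_mi ip S f -> defect_mi ip S g -> defect_mi ip S (a *: f + g).
Proof. by move=> hf hg x hx; rewrite (ipDr Hip) (ipZr Hip) hf // hg // mulr0 addr0. Qed.
Lemma defi0 : defect_i ip S 0. Proof. by move=> x _; rewrite (ip0r Hip). Qed.
Lemma defmi0 : defect_mi ip S 0. Proof. by move=> x _; rewrite (ip0r Hip). Qed.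
Lemma defiZ a f : defect_i ip S f -> defect_i ip S (a *: f).
Proof. by move=> hf; rewrite -(addr0 (a *: f)); apply: defiL => //; apply: defi0. Qed.
Lemma defmiZ a f : defect_mi ip S f -> defect_mi ip S (a *: f).
Proof. by move=> hf; rewrite -(addr0 (a *: f)); apply: defmiL => //; apply: defmi0. Qed.
Lemma defiD f g : defect_i ip S f -> defect_i ip S g -> defect_i ip S (f + g).
Proof. by move=> hf hg; rewrite -(scale1r f); apply: defiL. Qed.
Lemma defmiD f g : defect_mi ip S f -> defect_mi ip S g -> defect_mi ip S (f + g).
Proof. by move=> hf hg; rewrite -(scale1r f); apply: defmiL. Qed.
Lemma defiN f : defect_i ip S f -> defect_i ip S (- f).
Proof. by move=> hf; rewrite -scaleN1r; apply: defiZ. Qed.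
Lemma defmiN f : defect_mi ip S f -> defect_mi ip S (- f).
Proof. by move=> hf; rewrite -scaleN1r; apply: defmiZ. Qed.
Lemma defiB f g : defect_i ip S f -> defect_i ip S g -> defect_i ip S (f - g).
Proof. by move=> hf hg; apply: defiD => //; apply: defiN. Qed.
Lemma defmiB f g : defect_mi ip S f -> defect_mi ip S g -> defect_mi ip S (f - g).
Proof. by move=> hf hg; apply: defmiD => //; apply: defmiN. Qed.

Definition adjval (t : V * V * V) := app S t.1.1 + I *: t.1.2 - I *: t.2.

Lemma adj_decomp psi t : vN_decomp ip S psi t -> adjoint_graph ip S psi (adjval t).
Proof.
case: t => [[u a] b] [/= hu ha hb ->]; rewrite /adjval /=.
rewrite -scaleNr; apply: (adjD Hip); last by apply: adjNi.
apply: (adjD Hip); first exact: adjS.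
by apply: adjNmi.
Qed.

Lemma decomp_norm u a b : dom S u -> defect_mi ip S a -> defect_i ip S b ->
  sq ((app S u + I *: a - I *: b) + I *: (u + a + b)) = sq (app S u) + sq u + 4 * sq a.
Proof.
move=> hu ha hb.
have e : (app S u + I *: a - I *: b) + I *: (u + a + b) =
   (app S u + I *: u) + (2%:R * I) *: a.
  by apply: (vec_eq Hip) => t; ipsimp Hip; ring.
rewrite e (sqD Hip) (normid Hip HSsym conj_i ii hu).
rewrite (ipZr Hip) ha // mulr0 /= mulr0 addr0 (sqZ Hip).
suff -> : nc (2%:R * I) = 4 by [].
rewrite ncE /=; ring.
Qed.

Lemma vN_unique0 u a b : dom S u -> defect_mi ip S a -> defect_i ip S b ->
  u + a + b = 0 -> [/\ u = 0, a = 0 & b = 0].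
Proof.
move=> hu ha hb h0.
have hadj := adj_decomp (t := (u, a, b)) (And4 hu ha hb (esym h0)).
have e0 := adj_unique Hip HSdense hadj (@adj0 _ _ _ Hip S).
rewrite /adjval /= in e0.
have := decomp_norm hu ha hb; rewrite e0 h0 scaler0 addr0 (sq0 Hip) => e.
have h1 := sq_ge0 Hip (app S u); have h2 := sq_ge0 Hip u; have h3 := sq_ge0 Hip a.
have hu0 : u = 0 by apply: (sq_eq0 Hip); lra.
have ha0 : a = 0 by apply: (sq_eq0 Hip); lra.
split => //; by move: h0; rewrite hu0 ha0 !add0r.
Qed.

Lemma vN_unique psi t1 t2 : vN_decomp ip S psi t1 -> vN_decomp ip S psi t2 -> t1 = t2.
Proof.
case: t1 => [[u1 a1] b1] [/= hu1 ha1 hb1 e1]; case: t2 => [[u2 a2] b2] [/= hu2 ha2 hb2 e2].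
have e : (u1 - u2) + (a1 - a2) + (b1 - b2) = 0.
  have -> : (u1 - u2) + (a1 - a2) + (b1 - b2) = (u1 + a1 + b1) - (u2 + a2 + b2).
    by apply: (vec_eq Hip) => t; ipsimp Hip; ring.
  by rewrite -e1 -e2 subrr.
have [hu ha hb] := vN_unique0 (domB HSlin hu1 hu2) (defmiB ha1 ha2) (defiB hb1 hb2) e.
by rewrite (subr0_eq hu) (subr0_eq ha) (subr0_eq hb).
Qed.

Lemma vN_choose_eq psi t : vN_decomp ip S psi t -> vN_choose ip S psi = t.
Proof.
move=> h; have h' : vN_decomp ip S psi (vN_choose ip S psi).
  by apply: (epsilon_spec (inhabits (0, 0, 0)) (vN_decomp ip S psi)); exists t.
exact: vN_unique h' h.
Qed.

Lemma vN_exists psi : adjoint_dom ip S psi -> exists t, vN_decomp ip S psi t.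
Proof.
case=> z hz.
have [x [r [hx hr hw]]] := proj Hip Hcompl HSlin HSsym HSclosed conj_i ii (z + I *: psi).
pose h := (((2 : R)^-1)%:C)%C.
have hh : h + h = 1 by rewrite /h -RCD; congr (_%:C)%C; lra.
pose r' := h *: r.
have er : r = r' + r' by rewrite /r' -scalerDl hh scale1r.
have hr' : defect_mi ip S r' by apply: defmiZ; exact: hr.
pose a := - I *: r'.
have ha : defect_mi ip S a by apply: defmiZ.
pose b := psi - x - a.
have ez : z = app S x + I *: x + r - I *: psi by rewrite -hw addrK.
exists (x, a, b); split => //=; last by rewrite /b; apply: (vec_eq Hip) => t; ipsimp Hip; ring.
apply: defi_of_adj.
have hb := adjB Hip (adjB Hip hz (adjS hx)) (adjNmi ha).
suff <- : z - app S x - I *: a = - I *: b by exact: hb.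
rewrite ez er /a /b; apply: (vec_eq Hip) => t; ipsimp Hip; ring: (@ii R).
Qed.
End SLemmas.

Section Green.
Variables (R : realType) (V : lmodType R[i]) (ip : V -> V -> R[i]).
Hypothesis Hip : is_inner_product ip.
Local Notation sq := (sqnorm ip).
Local Notation I := ('i%C : R[i]).
Variable S : operator V.
Hypotheses (HSlin : is_linear_operator S) (HSsym : symmetric_operator ip S).

Lemma green psi phi t1 t2 : vN_decomp ip S psi t1 -> vN_decomp ip S phi t2 ->
  ip (adjval S t1) phi - ip psi (adjval S t2) = 2%:R * I * (ip t1.1.2 t2.1.2 - ip t1.2 t2.2).
Proof.
case: t1 => [[u a] b] [/= hu ha hb ->]; case: t2 => [[u' a'] b'] [/= hu' ha' hb' ->].
rewrite /adjval /=.
have r1 : ip (app S u) u' = ip u (app S u') by apply: HSsym.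
have r2 : ip (app S u) a' = ip u (I *: a') by apply: (adjNmi Hip).
have r3 : ip (app S u) b' = ip u (- I *: b') by apply: (adjNi Hip).
have r4 : ip a (app S u') = ip (I *: a) u'.
  by rewrite (ipC Hip (app S u')) (adjNmi Hip ha hu') -(ipC Hip).
have r5 : ip b (app S u') = ip (- I *: b) u'.
  by rewrite (ipC Hip (app S u')) (adjNi Hip hb hu') -(ipC Hip).
ipsimp Hip; rewrite r1 r2 r3 r4 r5; ipsimp Hip; ring: (@ii R).
Qed.
End Green.

Section JL.
Variables (R : realType) (V : lmodType R[i]) (ip : V -> V -> R[i]).
Hypothesis Hip : is_inner_product ip.
Local Notation I := ('i%C : R[i]).
Variable S : operator V.
Hypotheses (HSlin : is_linear_operator S).
Variable J : V -> V.
Hypotheses (HJ : fundamental_symmetry ip J) (HJS : commutes_with J S).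

Lemma JL a x y : J (a *: x + y) = a *: J x + J y. Proof. by case: HJ. Qed.
Lemma J0 : J 0 = 0.
Proof.
have := JL 1 0 0; rewrite !scale1r addr0 => /eqP.
by rewrite -subr_eq0 opprD addrA subrr sub0r oppr_eq0 => /eqP.
Qed.
Lemma JZ a x : J (a *: x) = a *: J x. Proof. by rewrite -(addr0 (a *: x)) JL J0 addr0. Qed.
Lemma JD x y : J (x + y) = J x + J y. Proof. by rewrite -(scale1r x) JL !scale1r. Qed.
Lemma JN x : J (- x) = - J x. Proof. by rewrite -scaleN1r JZ scaleN1r. Qed.
Lemma JB x y : J (x - y) = J x - J y. Proof. by rewrite JD JN. Qed.
Lemma Jip x y : ip (J x) y = ip x (J y). Proof. by case: HJ. Qed.
Lemma JJ x : J (J x) = x. Proof. by case: HJ. Qed.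

Lemma J_domS u : dom S u -> dom S (J u). Proof. by move=> h; case: (HJS h). Qed.
Lemma J_appS u : dom S u -> app S (J u) = J (app S u). Proof. by move=> h; case: (HJS h). Qed.

Lemma J_defi f : defect_i ip S f -> defect_i ip S (J f).
Proof.
move=> hf x hx; rewrite -Jip JB JZ -J_appS //; apply: hf; exact: J_domS.
Qed.
Lemma J_defmi f : defect_mi ip S f -> defect_mi ip S (J f).
Proof.
move=> hf x hx; rewrite -Jip JD JZ -J_appS //; apply: hf; exact: J_domS.
Qed.
Lemma J_adj y z : adjoint_graph ip S y z -> adjoint_graph ip S (J y) (J z).
Proof.
move=> h x hx; rewrite -Jip -J_appS // h ?Jip ?JJ //; exact: J_domS.
Qed.
Lemma J_decomp psi u a b : vN_decomp ip S psi (u, a, b) -> vN_decomp ip S (J psi) (J u, J a, J b).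
Proof.
case=> /= hu ha hb ->; split => /=; [exact: J_domS | exact: J_defmi | exact: J_defi |].
by rewrite !JD.
Qed.
End JL.

Section SA.
Variables (R : realType) (V : lmodType R[i]) (ip : V -> V -> R[i]).
Hypothesis Hip : is_inner_product ip.
Local Notation sq := (sqnorm ip).
Local Notation Re := (@complex.Re R).
Variable A : operator V.
Hypotheses (HAsa : self_adjoint ip A).

Lemma sa_sym : symmetric_operator ip A.
Proof. move=> x y hx hy; by have := (HAsa y (app A y)).2 (conj hy erefl); apply. Qed.

Lemma nc_add (a b : R[i]) : nc (a + b) <= 2 * nc a + 2 * nc b.
Proof.
case: a => a1 a2; case: b => b1 b2; rewrite !ncE /=.
have := sqr_ge0 (a1 - b1); have := sqr_ge0 (a2 - b2); rewrite !expr2; nra.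
Qed.

Lemma nc_small (d : R[i]) : (forall e : R, 0 < e -> nc d < e) -> d = 0.
Proof.
move=> h; apply: nc_eq0; apply/eqP; rewrite eq_le nc_ge0 andbT.
rewrite leNgt; apply/negP => hp; have := h _ hp; rewrite ltxx //.
Qed.

Lemma sa_closed : closed_operator ip A.
Proof.
move=> u x y hu hx hy.
suff : adjoint_graph ip A x y by move/(HAsa x y) => [? ->].
move=> v hv; apply/eqP; rewrite -subr_eq0; apply/eqP; apply: nc_small => e he.
set K := sq (app A v) + sq v + 1.
have hK : 0 < K by rewrite /K; have := sq_ge0 Hip (app A v); have := sq_ge0 Hip v; lra.
set e' := e / (4 * K).
have he' : 0 < e' by rewrite /e' divr_gt0 // mulr_gt0.
have hee : e' * (4 * K) = e by rewrite /e' mulfVK //; apply/eqP => h0; move: h0 hK; lra.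
have [N1 h1] := hx _ he'; have [N2 h2] := hy _ he'.
pose n := maxn N1 N2.
have k1 := h1 n (leq_maxl _ _); have k2 := h2 n (leq_maxr _ _).
have hs := sa_sym hv (hu n).
have ed : ip (app A v) x - ip v y = ip (app A v) (x - u n) - ip v (y - app A (u n)).
  by rewrite !(ipBr Hip) hs; ring.
rewrite ed.
have c1 := cauchy_schwarz Hip (app A v) (x - u n).
have c2 := cauchy_schwarz Hip v (y - app A (u n)).
have c3 := nc_add (ip (app A v) (x - u n)) (- ip v (y - app A (u n))).
have eN : forall a : R[i], nc (- a) = nc a by move=> a; rewrite !ncE raddfN /= raddfN /= !sqrrN.
rewrite eN in c3.
have s1 : sq (x - u n) = sq (u n - x) by rewrite -(sqN Hip) opprB.
have s2 : sq (y - app A (u n)) = sq (app A (u n) - y) by rewrite -(sqN Hip) opprB.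
rewrite s1 in c1; rewrite s2 in c2.
have g1 := sq_ge0 Hip (app A v); have g2 := sq_ge0 Hip v.
have g3 := sq_ge0 Hip (u n - x); have g4 := sq_ge0 Hip (app A (u n) - y).
move: c1 c2 c3 k1 k2 hee; rewrite /K.
move: (nc _) (nc _) (nc _) (sq (app A v)) (sq v) (sq (u n - x)) (sq (app A (u n) - y)) g1 g2 g3 g4.
move=> p q r a b s t g1 g2 g3 g4 c1 c2 c3 k1 k2 hee.
nra.
Qed.
End SA.

Section Main.
Variables (R : realType) (V : lmodType R[i]) (ip : V -> V -> R[i]).
Hypothesis Hip : is_inner_product ip.
Hypothesis Hcompl : hilbert_complete ip.
Local Notation sq := (sqnorm ip).
Local Notation I := ('i%C : R[i]).
Variable S : operator V.
Hypotheses (HSlin : is_linear_operator S) (HSdense : densely_defined ip S)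
  (HSclosed : closed_operator ip S) (HSsym : symmetric_operator ip S).
Variable J : V -> V.
Hypotheses (HJ : fundamental_symmetry ip J) (HJS : commutes_with J S).

Lemma twoI_neq0 : (2%:R * I) != 0.
Proof. by rewrite mulf_eq0 negb_or pnatr_eq0 I_neq0. Qed.

Lemma ip_self0 x : ip x x = 0 -> x = 0.
Proof. by case: Hip => _ _ _; apply. Qed.

Lemma decomp_Ni f : defect_i ip S f -> vN_decomp ip S f (0, 0, f).
Proof. by move=> hf; split => //=; [exact: (dom0 HSlin) | exact: defmi0 | rewrite !add0r]. Qed.

Lemma dir1 : (exists Q : V -> V, unitary_defect ip S Q /\
     (forall psi, adjoint_dom ip S psi ->
        Gamma0 ip S Q (J psi) = J (Gamma0 ip S Q psi) /\
        Gamma1 ip S Q (J psi) = J (Gamma1 ip S Q psi))) ->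
  (exists A : operator V, is_linear_operator A /\ extends A S /\
     self_adjoint ip A /\ commutes_with J A).
Proof.
move=> [Q [[Qlin Qmaps Qiso Qonto] HG]].
have HQJ : forall f, defect_i ip S f -> Q (J f) = J (Q f).
  move=> f hf.
  have hd := decomp_Ni hf.
  have hd' := decomp_Ni (J_defi HJ HJS hf).
  have hadj : adjoint_dom ip S f by exists (- I *: f); apply: (adjNi Hip).
  have := (HG f hadj).1; rewrite /Gamma0 (vN_choose_eq Hip HSlin HSdense HSsym hd)
    (vN_choose_eq Hip HSlin HSdense HSsym hd') /= !add0r => ->.
  by [].

have Q0 : Q 0 = 0.
  have := Qlin 1 0 0 (@defi0 _ _ _ Hip S) (@defi0 _ _ _ Hip S); rewrite !scale1r addr0 => /eqP.
  by rewrite -subr_eq0 opprD addrA subrr sub0r oppr_eq0 => /eqP.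
pose domA := fun y => exists u f, [/\ dom S u, defect_i ip S f & y = u - Q f + f].
pose A := Operator domA (fun y => epsilon (inhabits 0) (adjoint_graph ip S y)).
have hAadj0 : forall u f, dom S u -> defect_i ip S f ->
    adjoint_graph ip S (u - Q f + f) (app S u - I *: Q f + - I *: f).
  move=> u f hu hf; apply: (adjD Hip); last exact: (adjNi Hip hf).
  exact: (adjB Hip (adjS HSsym hu) (adjNmi Hip (Qmaps _ hf))).
have hAadj : forall y, domA y -> adjoint_graph ip S y (app A y).
  move=> y [u [f [hu hf ->]]]; rewrite /=.
  apply: (epsilon_spec (inhabits 0) (adjoint_graph ip S (u - Q f + f))).
  by eexists; apply: hAadj0.
have hAval : forall y z, domA y -> adjoint_graph ip S y z -> app A y = z.
  move=> y z hy hz; exact: (adj_unique Hip HSdense (hAadj y hy) hz).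
have hdomS : forall u, dom S u -> domA u.
  by move=> u hu; exists u, 0; split => //; [exact: (@defi0 _ _ _ Hip S) | rewrite Q0 subr0 addr0].
exists A; split; last split; last split.
-
  split; first by apply: hdomS; apply: (dom0 HSlin).
  move=> a y y' [u [f [hu hf ->]]] [u' [f' [hu' hf' ->]]].
  have hdy : domA (a *: (u - Q f + f) + (u' - Q f' + f')).
    exists (a *: u + u'), (a *: f + f'); split.
    + exact: (domL HSlin a hu hu').
    + exact: (defiL Hip _ hf hf').
    + rewrite Qlin //; apply: (vec_eq Hip) => t; ipsimp Hip; ring.
  split => //.
  apply: hAval => //; apply: (adjL Hip); apply: hAadj.
  + by exists u, f.
  + by exists u', f'.
-
  move=> x hx; split; first exact: hdomS.
  by apply: hAval; [apply: hdomS | apply: (adjS HSsym)].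
-
  move=> y z; split.
  + move=> hyz.
    have hyzS : adjoint_graph ip S y z.
      move=> x hx; have [_ e] : domA x /\ app A x = app S x.
        split; [exact: hdomS | by apply: hAval; [apply: hdomS | apply: (adjS HSsym)]].
      by rewrite -e; apply: hyz; apply: hdomS.
    have [[[u' a'] b'] ht] := vN_exists Hip Hcompl HSlin HSclosed HSsym (ex_intro _ z hyzS).
    have ez : z = adjval S (u', a', b') := adj_unique Hip HSdense hyzS (adj_decomp Hip HSsym ht).
    case: (ht) => /= hu' ha' hb' ey.
    have key : forall g, defect_i ip S g -> ip (Q g) (a' + Q b') = 0.
      move=> g hg.
      have hmi : defect_mi ip S (- Q g) := defmiN Hip (Qmaps _ hg).
      have hdx : vN_decomp ip S (0 - Q g + g) (0, - Q g, g).
        by split => //=; apply: (dom0 HSlin).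
      have hxA : domA (0 - Q g + g) by exists 0, g; split => //; apply: (dom0 HSlin).
      have ev : app A (0 - Q g + g) = adjval S (0, - Q g, g).
        by apply: hAval => //; apply: (adj_decomp Hip HSsym).
      have := green Hip HSsym hdx ht; rewrite -ev -ez hyz // subrr /= => /eqP.
      rewrite eq_sym mulf_eq0 (negbTE twoI_neq0) /= subr_eq0 => /eqP.
      rewrite (ipNl Hip) -(Qiso _ _ hg hb') => h.
      by rewrite (ipDr Hip) -h addrN.
    have hh : defect_mi ip S (a' + Q b') := defmiD Hip ha' (Qmaps _ hb').
    have [g hg eg] := Qonto _ hh.
    have e0 : a' + Q b' = 0 by apply: ip_self0; rewrite -{1}eg key.
    have ea : a' = - Q b' by rewrite -(subr0 a') -e0 opprD addrA subrr sub0r.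
    have hdy : domA y by exists u', b'; split => //; rewrite ey ea.
    split => //; exact: (esym (hAval y z hdy hyzS)).
  + move=> [hy ->] x hx.
    case: (hx) => u [f [hu hf ex]]; case: (hy) => u' [f' [hu' hf' ey]].
    have hmi : defect_mi ip S (- Q f) := defmiN Hip (Qmaps _ hf).
    have hmi' : defect_mi ip S (- Q f') := defmiN Hip (Qmaps _ hf').
    have hdx : vN_decomp ip S x (u, - Q f, f) by split => //=; rewrite ex.
    have hdy : vN_decomp ip S y (u', - Q f', f') by split => //=; rewrite ey.
    have evx : app A x = adjval S (u, - Q f, f) by apply: hAval => //; apply: (adj_decomp Hip HSsym).
    have evy : app A y = adjval S (u', - Q f', f') by apply: hAval => //; apply: (adj_decomp Hip HSsym).
    have := green Hip HSsym hdx hdy; rewrite -evx -evy /= (ipNl Hip) (ipNr Hip) opprK Qiso //.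
    by rewrite subrr mulr0 => /eqP; rewrite subr_eq0 => /eqP.
-
  move=> y hy; case: (hy) => u [f [hu hf ey]].
  have hdJ : domA (J y).
    exists (J u), (J f); split.
    + have := @J_domS _ _ S J HJS u hu. exact.
    + exact: (J_defi HJ HJS hf).
    + by rewrite ey !(JD HJ) (JN HJ) HQJ.
  split => //; apply: hAval => //; apply: (J_adj HJ HJS); exact: hAadj.
Qed.

Lemma dir2 : (exists A : operator V, is_linear_operator A /\ extends A S /\
     self_adjoint ip A /\ commutes_with J A) ->
  (exists Q : V -> V, unitary_defect ip S Q /\
     (forall psi, adjoint_dom ip S psi ->
        Gamma0 ip S Q (J psi) = J (Gamma0 ip S Q psi) /\
        Gamma1 ip S Q (J psi) = J (Gamma1 ip S Q psi))).
Proof.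
move=> [A [HAlin [HAext [HAsa HAJ]]]].
have HAsym := sa_sym HAsa.
have HAcl := sa_closed Hip HAsa.
have HAadjS : forall y, dom A y -> adjoint_graph ip S y (app A y).
  move=> y hy x hx; have [hxA e] := HAext x hx; rewrite -e; exact: HAsym.
have HAdec : forall y, dom A y -> exists t, vN_decomp ip S y t /\ app A y = adjval S t.
  move=> y hy; have [t ht] := vN_exists Hip Hcompl HSlin HSclosed HSsym (ex_intro _ _ (HAadjS y hy)).
  exists t; split => //; exact: (adj_unique Hip HSdense (HAadjS y hy) (adj_decomp Hip HSsym ht)).
have surj : forall c : R[i], conjc c = - c -> c * c = -1 ->
    forall w, exists x, dom A x /\ w = app A x + c *: x.
  move=> c hc hc2 w.
  have [x [r [hx hr ew]]] := proj Hip Hcompl HAlin HAsym HAcl hc hc2 w.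
  have hadj : adjoint_graph ip A r (c *: r).
    move=> x' hx'; have := hr x' hx'; rewrite (ipDl Hip) (ipZl Hip) (ipZr Hip) hc => /eqP.
    by rewrite addr_eq0 => /eqP ->; rewrite mulNr.
  have [hrA er] := (HAsa r (c *: r)).1 hadj.
  have hs := HAsym r r hrA hrA; rewrite -er (ipZl Hip) (ipZr Hip) hc in hs.
  have e2 : ip r r = 0.
    have e3 : 2%:R * ip r r = (- c * ip r r) * c - (c * ip r r) * c by ring: hc2.
    rewrite -hs subrr in e3.
    move/eqP: e3; rewrite mulf_eq0 pnatr_eq0 /= => /eqP //.
  have r0 := ip_self0 e2.
  exists x; split => //; by rewrite ew /= r0 addr0.
pose G := fun b a => defect_mi ip S a /\ exists u, dom S u /\ dom A (u + a + b).
have hdecG : forall u a b, dom S u -> defect_mi ip S a -> defect_i ip S b ->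
    dom A (u + a + b) -> app A (u + a + b) = adjval S (u, a, b).
  move=> u a b hu ha hb hy; have hd : vN_decomp ip S (u + a + b) (u, a, b) by split.
  exact: (adj_unique Hip HSdense (HAadjS _ hy) (adj_decomp Hip HSsym hd)).
have hGiso : forall b a b' a', defect_i ip S b -> defect_i ip S b' -> G b a -> G b' a' ->
    ip a a' = ip b b'.
  move=> b a b' a' hb hb' [ha [u [hu hy]]] [ha' [u' [hu' hy']]].
  have hd : vN_decomp ip S (u + a + b) (u, a, b) by split.
  have hd' : vN_decomp ip S (u' + a' + b') (u', a', b') by split.
  have := green Hip HSsym hd hd'.
  rewrite -(hdecG _ _ _ hu ha hb hy) -(hdecG _ _ _ hu' ha' hb' hy') HAsym // subrr /= => /eqP.
  rewrite eq_sym mulf_eq0 (negbTE twoI_neq0) /= subr_eq0 => /eqP //.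
have hGlin : forall k b a b' a', G b a -> G b' a' -> G (k *: b + b') (k *: a + a').
  move=> k b a b' a' [ha [u [hu hy]]] [ha' [u' [hu' hy']]]; split; first exact: (defmiL Hip k ha ha').
  exists (k *: u + u'); split; first exact: (domL HSlin k hu hu').
  have -> : k *: u + u' + (k *: a + a') + (k *: b + b') = k *: (u + a + b) + (u' + a' + b').
    by apply: (vec_eq Hip) => t; ipsimp Hip; ring.
  exact: (domL HAlin k hy hy').
have hGfun : forall b a a', defect_i ip S b -> G b a -> G b a' -> a = a'.
  move=> b a a' hb h h'.
  have h2 := hGlin (-1) _ _ _ _ h h'.
  have hb0 : defect_i ip S ((-1) *: b + b) := defiL Hip (-1) hb hb.
  have := hGiso _ _ _ _ hb0 hb0 h2 h2.
  by rewrite !scaleN1r addNr (ip0l Hip) => /ip_self0 /eqP; rewrite addrC subr_eq0 => /eqP ->.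
have hNI : conjc (- I) = - - I by rewrite conjN conj_i.
have hNI2 : (- I) * (- I) = -1 by rewrite mulrNN ii.
have hGtot : forall b, defect_i ip S b -> exists a, G b a.
  move=> b hb; have [y [hy ew]] := surj _ hNI hNI2 ((- (2%:R * I)) *: b).
  have [[[u a] b'] [[/= hu ha hb' ey] e]] := HAdec y hy.
  pose d := b' - b.
  have hd : defect_i ip S d := defiB Hip hb' hb.
  have eq0 : (app S u - I *: u) - (2%:R * I) *: d = 0.
    have -> : (app S u - I *: u) - (2%:R * I) *: d =
         (app A y + (- I) *: y) - ((- (2%:R * I)) *: b).
      rewrite e /adjval /= ey /d; apply: (vec_eq Hip) => t; ipsimp Hip; ring: (@ii R).
    by rewrite -ew subrr.
  have e1 := subr0_eq eq0.
  have := hd u hu; rewrite e1 (ipZl Hip) => /eqP; rewrite mulf_eq0 (negbTE twoI_neq0) /= => /eqP.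
  move/ip_self0 => /subr0_eq eb.
  exists a; split => //; exists u; split => //; by rewrite -eb -ey.
have hGonto : forall h, defect_mi ip S h -> exists b, defect_i ip S b /\ G b h.
  move=> h hh; have [y [hy ew]] := surj _ conj_i ii ((2%:R * I) *: h).
  have [[[u a] b] [[/= hu ha hb ey] e]] := HAdec y hy.
  pose d := h - a.
  have hd : defect_mi ip S d := defmiB Hip hh ha.
  have eq0 : (app S u + I *: u) - (2%:R * I) *: d = 0.
    have -> : (app S u + I *: u) - (2%:R * I) *: d =
         (app A y + I *: y) - ((2%:R * I) *: h).
      rewrite e /adjval /= ey /d; apply: (vec_eq Hip) => t; ipsimp Hip; ring: (@ii R).
    by rewrite -ew subrr.
  have e1 := subr0_eq eq0.
  have := hd u hu; rewrite e1 (ipZl Hip) => /eqP; rewrite mulf_eq0 (negbTE twoI_neq0) /= => /eqP.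
  move/ip_self0 => /subr0_eq ea.
  exists b; split => //; split => //; exists u; split => //; by rewrite ea -ey.
have hGJ : forall b a, G b a -> G (J b) (J a).
  move=> b a [ha [u [hu hy]]]; split; first exact: (J_defmi HJ HJS ha).
  exists (J u); split; first exact: (@J_domS _ _ S J HJS u hu).
  rewrite -!(JD HJ); exact: (HAJ _ hy).1.
pose Q := fun b => - epsilon (inhabits 0) (G b).
have hQ : forall b, defect_i ip S b -> G b (- Q b).
  move=> b hb; rewrite /Q opprK; exact: (epsilon_spec (inhabits 0) (G b) (hGtot b hb)).
have hQval : forall b a, defect_i ip S b -> G b a -> Q b = - a.
  move=> b a hb hG; have := hGfun _ _ _ hb (hQ b hb) hG; by move=> <-; rewrite opprK.
have HQJ : forall b, defect_i ip S b -> Q (J b) = J (Q b).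
  move=> b hb; rewrite (hQval _ _ (J_defi HJ HJS hb) (hGJ _ _ (hQ b hb))) (JN HJ) opprK //.
exists Q; split.
- split.
  + move=> k f g hf hg.
    have hG := hGlin k _ _ _ _ (hQ f hf) (hQ g hg).
    by rewrite (hQval _ _ (defiL Hip k hf hg) hG) scalerN opprD !opprK.
  + move=> f hf; have := defmiN Hip (hQ f hf).1; by rewrite opprK.
  + move=> f g hf hg; have := hGiso _ _ _ _ hf hg (hQ f hf) (hQ g hg).
    by rewrite (ipNl Hip) (ipNr Hip) opprK.
  + move=> h hh; have [b [hb hG]] := hGonto _ (defmiN Hip hh).
    by exists b => //; rewrite (hQval _ _ hb hG) opprK.
- move=> psi hpsi.
  have [[[u a] b] ht] := vN_exists Hip Hcompl HSlin HSclosed HSsym hpsi.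
  have htJ := J_decomp HJ HJS ht.
  rewrite /Gamma0 /Gamma1 (vN_choose_eq Hip HSlin HSdense HSsym ht)
    (vN_choose_eq Hip HSlin HSdense HSsym htJ) /=.
  case: ht => _ _ hb _.
  rewrite HQJ //; split; first by rewrite (JD HJ).
  by rewrite (JB HJ) !(JZ HJ).
Qed.
End Main.

Unset Implicit Arguments.

Theorem proposition2p3 (R : realType) (V : lmodType R[i]) (ip : V -> V -> R[i])
    (Hip : is_inner_product ip) (Hcompl : hilbert_complete ip)
    (S : operator V)
    (HSlin : is_linear_operator S) (HSdense : densely_defined ip S)
    (HSclosed : closed_operator ip S) (HSsym : symmetric_operator ip S)
    (HSdef : equal_deficiency_indices ip S)
    (J : V -> V) (HJ : fundamental_symmetry ip J) (HJS : commutes_with J S) :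
  (exists Q : V -> V, unitary_defect ip S Q /\
     (forall psi, adjoint_dom ip S psi ->
        Gamma0 ip S Q (J psi) = J (Gamma0 ip S Q psi) /\
        Gamma1 ip S Q (J psi) = J (Gamma1 ip S Q psi)))
  <->
  (exists A : operator V, is_linear_operator A /\ extends A S /\
     self_adjoint ip A /\ commutes_with J A).
Proof.
split => H.
- by apply: dir1 H.
- by apply: dir2 H.
Qed.
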